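(* There is a non-separable closed subspace of $BV[0,1]$ contained in $\mathcal{F}\cup\{0\}$.
   Context: $BV[0,1]$ is the Banach space of real-valued, left-continuous functions of bounded variation on $[0,1]$ with norm $\|f\|=|f(0)|+V(f)$, where $V(f)$ is the total variation of $f$ on $[0,1]$. $\mathcal{F}$ is the set of functions of bounded variation on $[0,1]$ whose set of jump discontinuities is dense in $[0,1]$. *)

(* Defs.v *)
From HB Require Import structures.
From mathcomp Require Import all_boot all_order all_algebra.
From mathcomp Require Import all_classical all_reals all_analysis.
Set Implicit Arguments. Unset Strict Implicit. Unset Printing Implicit Defensive.
Import Order.TTheory GRing.Theory Num.Theory.
Import numFieldNormedType.Exports.
Local Open Scope classical_set_scope.
Local Open Scope ring_scope.

(* Functions are R -> R; only their values on [0,1] matter. *)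

Definition left_cont01 (R : realType) (f : R -> R) : Prop :=
  forall x : R, 0 < x -> x <= 1 -> f @ x^'- --> f x.

Definition BV01 (R : realType) : set (R -> R) :=
  [set f | left_cont01 f /\ bounded_variation 0 1 f].

Definition bvnorm (R : realType) (f : R -> R) : R :=
  `|f 0| + fine (total_variation 0 1 f).

Definition is_zero01 (R : realType) (f : R -> R) : Prop :=
  forall x : R, 0 <= x -> x <= 1 -> f x = 0.

(* jump discontinuities of f on [0,1]: points of [0,1] where f (restricted
   to [0,1]) is not continuous; for BV functions all discontinuities are jumps *)
Definition jumps01 (R : realType) (f : R -> R) : set R :=
  [set x : R | 0 <= x <= 1 /\
     ~ (f @ within (fun y : R => 0 <= y <= 1) (nbhs x) --> f x)].

Definition dense01 (R : realType) (A : set R) : Prop :=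
  forall a b : R, 0 <= a -> a < b -> b <= 1 -> exists2 x, A x & a < x < b.

Definition classF (R : realType) : set (R -> R) :=
  [set f | bounded_variation 0 1 f /\ dense01 (jumps01 f)].

Definition bv_subspace (R : realType) (S : set (R -> R)) : Prop :=
  S `<=` @BV01 R /\ S (fun _ => 0) /\
  (forall f g, S f -> S g -> S (f \+ g)) /\
  (forall (c : R) f, S f -> S (fun x => c * f x)).

Definition bv_closed (R : realType) (S : set (R -> R)) : Prop :=
  forall f, @BV01 R f ->
    (forall e : R, 0 < e -> exists2 g, S g & bvnorm (f \- g) < e) -> S f.

Definition bv_separable (R : realType) (S : set (R -> R)) : Prop :=
  exists D : set (R -> R), [/\ countable D, D `<=` S &
    forall f, S f -> forall e : R, 0 < e -> exists2 g, D g & bvnorm (f \- g) < e].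

(* Main.v *)
Require Import Defs.
From HB Require Import structures.
From mathcomp Require Import all_boot all_order all_algebra.
From mathcomp Require Import all_classical all_reals all_analysis.
From mathcomp Require Import ring lra.
Set Implicit Arguments. Unset Strict Implicit. Unset Printing Implicit Defensive.
Import Order.TTheory GRing.Theory Num.Theory.
Import numFieldNormedType.Exports.
Local Open Scope classical_set_scope.
Local Open Scope ring_scope.

Section GFun.
Context {R : realType}.

Definition tau (N : nat) : R := ((2:R) ^+ N)^-1.
Definition wt (m : nat) : R := tau m.+1.
Definition nlev (m : nat) : nat := (3 * m + 4)%N.
Definition av (m : nat) : R := wt m / (nlev m)%:R.
Definition pt (m p : nat) : R := ((p%:R : R) - (m.+1)%:R) / (m.+1)%:R.
Definition ind (b : bool) : R := if b then 1 else 0.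
Definition Lv (m : nat) (x : R) : R := \sum_(p < nlev m) av m * ind (pt m p < x).
Definition GN (N : nat) (x : R) : R := \sum_(0 <= m < N) Lv m x.
Definition g (x : R) : R := sup (range (fun N => GN N x)).

Lemma ind_ge0 b : 0 <= ind b. Proof. by rewrite /ind; case: b. Qed.
Lemma ind_le1 b : ind b <= 1. Proof. by rewrite /ind; case: b. Qed.

Lemma ind_mono (c z x : R) : z <= x -> ind (c < z) <= ind (c < x).
Proof.
move=> zx; rewrite /ind; case: ifP => h1; case: ifP => h2 //.
by rewrite (lt_le_trans h1 zx) in h2.
Qed.

Lemma tau_gt0 N : 0 < tau N.
Proof. by rewrite /tau invr_gt0 exprn_gt0. Qed.

Lemma tauS N : tau N = tau N.+1 + tau N.+1.
Proof.
rewrite /tau exprS; have h : (2:R)^+N != 0 by rewrite expf_neq0.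
by field; rewrite h.
Qed.

Lemma av_gt0 m : 0 < av m.
Proof. by rewrite /av divr_gt0 ?tau_gt0 // ltr0n /nlev addn4. Qed.

Lemma Lv_ge0 m x : 0 <= Lv m x.
Proof. by apply: sumr_ge0 => p _; by rewrite mulr_ge0 ?ind_ge0 // ltW // av_gt0. Qed.

Lemma Lv_le m x : Lv m x <= wt m.
Proof.
apply: (@le_trans _ _ (\sum_(p < nlev m) av m)).
  by apply: ler_sum => p _; rewrite ler_piMr ?ind_le1 ?ltW ?av_gt0.
rewrite sumr_const card_ord /av -[X in X <= _]mulr_natr divfK //.
by rewrite pnatr_eq0 /nlev addn4.
Qed.

Lemma Lv_homo m x y : x <= y -> Lv m x <= Lv m y.
Proof.
move=> xy; apply: ler_sum => p _; apply: ler_wpM2l; first by rewrite ltW ?av_gt0.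
exact: ind_mono.
Qed.

Lemma sum_wt N M : (N <= M)%N -> \sum_(N <= m < M) wt m = tau N - tau M.
Proof.
elim: M => [|M IH]; first by rewrite leqn0 => /eqP ->; rewrite big_geq // subrr.
rewrite leq_eqVlt => /orP [/eqP -> | ]; first by rewrite big_geq // subrr.
rewrite ltnS => NM; rewrite big_nat_recr //= IH // /wt [tau M]tauS.
lra.
Qed.

Lemma GN_split N M x : (N <= M)%N -> GN M x = GN N x + \sum_(N <= m < M) Lv m x.
Proof. by move=> NM; rewrite /GN (big_cat_nat (leq0n N) NM). Qed.

Lemma tail_le N M x : \sum_(N <= m < M) Lv m x <= tau N.
Proof.
case: (leqP N M) => NM.
  apply: (@le_trans _ _ (\sum_(N <= m < M) wt m)).
    by apply: ler_sum => m _; apply: Lv_le.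
  rewrite sum_wt //; have := tau_gt0 M; lra.
rewrite big_geq; first exact: ltW (tau_gt0 N).
exact: ltnW.
Qed.

Lemma tail_ge0 N M x : 0 <= \sum_(N <= m < M) Lv m x.
Proof. by apply: sumr_ge0 => m _; apply: Lv_ge0. Qed.

Lemma GN_mono N M x : (N <= M)%N -> GN N x <= GN M x.
Proof. by move=> NM; rewrite (GN_split x NM) lerDl tail_ge0. Qed.

Lemma GN_le1 N x : GN N x <= 1.
Proof.
have := tail_le 0 N x; rewrite /GN /tau expr0 invr1 //.
Qed.

Lemma GN_ge0 N x : 0 <= GN N x.
Proof. exact: tail_ge0. Qed.

Lemma GN_tail N M x : GN M x <= GN N x + tau N.
Proof.
case: (leqP N M) => NM.
  by rewrite (GN_split x NM) lerD2l tail_le.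
by apply: le_trans (GN_mono x (ltnW NM)) _; rewrite lerDl ltW // tau_gt0.
Qed.

Lemma has_sup_GN x : has_sup (range (fun N => GN N x)).
Proof.
split; first by exists (GN 0 x), 0%N.
by exists 1 => _ [N _ <-]; exact: GN_le1.
Qed.

Lemma g_ge N x : GN N x <= g x.
Proof. by apply: sup_upper_bound; [exact: has_sup_GN | exists N]. Qed.

Lemma g_le N x : g x <= GN N x + tau N.
Proof.
apply: ge_sup; first by exists (GN 0 x), 0%N.
by move=> _ [M _ <-]; exact: GN_tail.
Qed.

Lemma g_homo x y : x <= y -> g x <= g y.
Proof.
move=> xy; apply: ge_sup; first by exists (GN 0 x), 0%N.
move=> _ [M _ <-]; apply: le_trans (g_ge M y); rewrite /GN.
by apply: ler_sum => m _; apply: Lv_homo.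
Qed.

Lemma g_ge0 x : 0 <= g x.
Proof. exact: le_trans (GN_ge0 0 x) (g_ge 0 x). Qed.

Lemma g_le1 x : g x <= 1.
Proof.
apply: le_trans (g_le 0 x) _; rewrite /GN big_geq // add0r /tau expr0 invr1 //.
Qed.

Lemma tau_small e : 0 < e -> exists N, forall M, (N <= M)%N -> tau M < e.
Proof.
move=> e0; exists (Num.truncn (e^-1)).+1 => M NM.
rewrite /tau -(invrK e) ltf_pV2 ?posrE ?exprn_gt0 ?invr_gt0 //.
apply: (lt_le_trans (truncnS_gt _)); apply: le_trans (_ : M%:R <= _).
  by rewrite ler_nat.
rewrite -natrX ler_nat; apply: ltnW; apply: ltn_expl.
by [].
Qed.

Lemma GN_eq N z x : z <= x ->
  (forall m p, (m < N)%N -> (p < nlev m)%N -> ~ (z <= pt m p < x)) ->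
  GN N x = GN N z.
Proof.
move=> zx H; rewrite /GN big_nat [RHS]big_nat; apply: eq_bigr => m /andP [_ mN].
apply: eq_bigr => p _; congr (_ * ind _).
have Hm := H m p mN (ltn_ord p).
case h1: (pt m p < x); case h2: (pt m p < z) => //.
  by exfalso; apply: Hm; rewrite h1 andbT leNgt h2.
by rewrite (lt_le_trans h2 zx) in h1.
Qed.

Lemma GN_jump N z x m p : (m < N)%N -> (p < nlev m)%N -> z <= pt m p < x ->
  av m <= GN N x - GN N z.
Proof.
move=> mN pl /andP [h1 h2].
have zx : z <= x := le_trans h1 (ltW h2).
rewrite /GN -sumrB big_mkord (bigD1 (Ordinal mN)) //=.
apply: le_trans (_ : Lv m x - Lv m z <= _); last first.
  rewrite lerDl; apply: sumr_ge0 => i _; rewrite subr_ge0; exact: Lv_homo.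
rewrite /Lv -sumrB (bigD1 (Ordinal pl)) //=.
have -> : ind (pt m (Ordinal pl) < x) = 1 by rewrite /ind /= h2.
have -> : ind (pt m (Ordinal pl) < z) = 0 by rewrite /ind /= ltNge h1.
rewrite mulr1 mulr0 subr0 lerDl.
apply: sumr_ge0 => i _; rewrite -mulrBr mulr_ge0 //; first exact: ltW (av_gt0 m).
by rewrite subr_ge0 ind_mono.
Qed.

Lemma g_jump m p z x : (p < nlev m)%N -> z <= pt m p < x -> av m <= g x - g z.
Proof.
move=> pl hz; apply/ler_addgt0Pr => e e0.
have [N0 HN] := tau_small e0.
pose N := maxn N0 m.+1.
have mN : (m < N)%N by rewrite leq_max leqnn orbT.
have := GN_jump mN pl hz.
have := g_ge N x; have := g_le N z; have := HN N (leq_maxl _ _).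
lra.
Qed.

Lemma g_flat N z x : z <= x ->
  (forall m p, (m < N)%N -> (p < nlev m)%N -> ~ (z <= pt m p < x)) ->
  g x - g z <= tau N.
Proof.
move=> zx H; have := GN_eq zx H; have := g_le N x; have := g_ge N z.
lra.
Qed.


End GFun.

Section Ev.
Context {R : realType}.

Definition Ev (P : R -> Prop) := exists2 d : R, 0 < d & forall t, 0 < t -> t <= d -> P t.

Lemma Ev_and P Q : Ev P -> Ev Q -> Ev (fun t => P t /\ Q t).
Proof.
move=> [d1 d10 H1] [d2 d20 H2]; exists (Num.min d1 d2); first by rewrite lt_min d10.
by move=> t t0; rewrite le_min => /andP [h1 h2]; split; [exact: H1|exact: H2].
Qed.

Lemma Ev_impl (P Q : R -> Prop) : (forall t, 0 < t -> P t -> Q t) -> Ev P -> Ev Q.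
Proof. by move=> PQ [d d0 H]; exists d => // t t0 td; apply: PQ => //; apply: H. Qed.

Lemma Ev_le c : 0 < c -> Ev (fun t => t <= c).
Proof. by move=> c0; exists c. Qed.

Lemma Ev_true : Ev (fun _ => True).
Proof. by exists 1. Qed.

Lemma Ev_nat N (P : nat -> R -> Prop) : (forall m, (m < N)%N -> Ev (P m)) ->
  Ev (fun t => forall m, (m < N)%N -> P m t).
Proof.
elim: N => [|N IH] H.
  by apply: Ev_impl Ev_true => t _ _ m.
have := Ev_and (IH (fun m mN => H m (ltnW mN))) (H N (leqnn _)).
apply: Ev_impl => t _ [h1 h2] m; rewrite ltnS leq_eqVlt => /orP [/eqP -> //|].
exact: h1.
Qed.

Lemma Ev_seq (T : eqType) (s : seq T) (P : T -> R -> Prop) :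
  (forall i, i \in s -> Ev (P i)) -> Ev (fun t => forall i, i \in s -> P i t).
Proof.
elim: s => [|a s IH] H.
  by apply: Ev_impl Ev_true => t _ _ i.
have := Ev_and (IH (fun i hi => H i (@mem_behead _ (a :: s) _ hi))) (H a (mem_head _ _)).
apply: Ev_impl => t _ [h1 h2] i; rewrite inE => /orP [/eqP -> //|].
exact: h1.
Qed.

Lemma Ev_ex P : Ev P -> exists t, 0 < t /\ P t.
Proof. by move=> [d d0 H]; exists d; split => //; apply: H. Qed.

Lemma Ev_left (F : R -> R) x :
  (forall e, 0 < e -> Ev (fun d => forall z, x - d < z -> z < x -> `|F x - F z| < e)) ->
  F @ x^'- --> F x.
Proof.
move=> H; apply/cvgrPdist_lt => e e0; have [d d0 Hd] := H e e0.
rewrite near_withinE; apply/nbhs_ballP; exists d => // z /= + zx.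
rewrite -ball_normE /= => hz; apply: (Hd d) => //.
by move: hz; rewrite ltr_norml; lra.
Qed.

Lemma Ev_within (f : R -> R) (y : R) : 0 <= y -> y < 1 ->
  f @ within (fun z : R => 0 <= z <= 1) (nbhs y) --> f y ->
  forall e, 0 < e -> Ev (fun d => `|f (y + d) - f y| < e).
Proof.
move=> y0 y1 /cvgrPdist_lt H e e0; have := H e e0.
rewrite near_withinE => /nbhs_ballP [r r0 Hr].
have y1p : 0 < 1 - y by rewrite subr_gt0.
have r2 : 0 < r / 2 by rewrite divr_gt0.
have := Ev_and (Ev_le r2) (Ev_le y1p).
apply: Ev_impl => t t0 [h1 h2]; rewrite distrC; apply: Hr.
  rewrite -ball_normE /= opprD addrA subrr add0r normrN ger0_norm; [|lra].
  have r0p : 0 < r := r0; lra.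
apply/andP; split; lra.
Qed.

End Ev.

Section Cont.
Context {R : realType}.
Local Notation g := (@g R).

Definition isQ (x : R) := exists r : rat, x = ratr r.

Lemma isQB x y : isQ x -> isQ y -> isQ (x - y).
Proof. by move=> [r ->] [s ->]; exists (r - s); rewrite rmorphB. Qed.

Lemma isQD x y : isQ x -> isQ y -> isQ (x + y).
Proof. by move=> [r ->] [s ->]; exists (r + s); rewrite rmorphD. Qed.

Lemma isQ_pt m p : isQ (pt m p).
Proof.
exists ((p%:R - (m.+1)%:R) / (m.+1)%:R).
by rewrite /pt fmorph_div rmorphB !rmorph_nat.
Qed.

Lemma avoid_r (u c : R) : c != u -> Ev (fun d => ~ (u <= c < u + d)).
Proof.
move=> cu; case: (ltP c u) => h.
  by apply: Ev_impl Ev_true => t _ _ /andP [h1 _]; lra.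
have cu2 : 0 < c - u by rewrite subr_gt0 lt_neqAle eq_sym cu h.
by apply: Ev_impl (Ev_le cu2) => t _ tl /andP [_]; lra.
Qed.

Lemma avoid_l (u c : R) : Ev (fun d => forall z, u - d < z -> ~ (z <= c < u)).
Proof.
case: (ltP c u) => h.
  have uc : 0 < u - c by rewrite subr_gt0.
  by apply: Ev_impl (Ev_le uc) => t _ tl z zl /andP [h1 _]; lra.
by apply: Ev_impl Ev_true => t _ _ z _ /andP [_]; lra.
Qed.

Lemma g_right (u : R) : ~ isQ u -> forall e, 0 < e -> Ev (fun d => g (u + d) - g u < e).
Proof.
move=> nQ e e0; have [N HN] := tau_small e0.
have : Ev (fun d => forall m, (m < N)%N -> forall p, (p < nlev m)%N ->
   ~ (u <= pt m p < u + d)).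
  apply: Ev_nat => m _; apply: Ev_nat => p _; apply: avoid_r.
  by apply/eqP => h; apply: nQ; rewrite -h; exact: isQ_pt.
apply: Ev_impl => t t0 H.
apply: le_lt_trans (HN N (leqnn _)); apply: g_flat; first lra.
by move=> m p mN pl; apply: H.
Qed.

Definition LC (F : R -> R) x := forall e, 0 < e ->
  Ev (fun d => forall z, x - d < z -> z < x -> `|F x - F z| < e).

Lemma g_LC u : LC g u.
Proof.
move=> e e0; have [N HN] := tau_small e0.
have : Ev (fun d => forall m, (m < N)%N -> forall p, (p < nlev m)%N ->
   forall z, u - d < z -> ~ (z <= pt m p < u)).
  by apply: Ev_nat => m _; apply: Ev_nat => p _; apply: avoid_l.
apply: Ev_impl => t t0 H z z1 z2.
rewrite ger0_norm; last by rewrite subr_ge0 g_homo // ltW.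
apply: le_lt_trans (HN N (leqnn _)); apply: g_flat; first exact: ltW.
by move=> m p mN pl; apply: H.
Qed.

Lemma LC_shift (F : R -> R) t x : LC F (x - t) -> LC (fun y => F (y - t)) x.
Proof.
move=> H e e0; apply: Ev_impl (H e e0) => d d0 Hd z z1 z2.
by apply: Hd; lra.
Qed.

Lemma LC_add F G x : LC F x -> LC G x -> LC (F \+ G) x.
Proof.
move=> HF HG e e0; have e2 : 0 < e / 2 by rewrite divr_gt0.
apply: Ev_impl (Ev_and (HF _ e2) (HG _ e2)) => d d0 [h1 h2] z z1 z2 /=.
have := h1 z z1 z2; have := h2 z z1 z2.
rewrite opprD addrACA; move: (F x - F z) (G x - G z) => a b ha hb.
by apply: le_lt_trans (ler_normD a b) _; lra.
Qed.

Lemma LC_scale F c x : LC F x -> LC (fun y => c * F y) x.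
Proof.
move=> HF e e0; have e2 : 0 < e / (`|c| + 1) by rewrite divr_gt0 // ltr_pwDr.
apply: Ev_impl (HF _ e2) => d d0 h z z1 z2.
rewrite -mulrBr normrM; have := h z z1 z2.
rewrite ltr_pdivlMr ?ltr_pwDr // => h3.
apply: le_lt_trans h3; rewrite mulrDr mulr1 mulrC lerDl //.
Qed.

Lemma LC_cst c x : LC (fun _ => c) x.
Proof. by move=> e e0; apply: Ev_impl Ev_true => d _ _ z _ _; rewrite subrr normr0. Qed.

Lemma LC_combo (s : seq R) (c : R -> R) x :
  LC (fun y => \sum_(t <- s) c t * g (y - t)) x.
Proof.
elim: s => [|a s IH].
  have -> : (fun y => \sum_(t <- [::]) c t * g (y - t)) = (fun _ => 0).
    by apply: funext => y; rewrite big_nil.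
  exact: LC_cst.
have -> : (fun y => \sum_(t <- a :: s) c t * g (y - t)) =
   (fun y => c a * g (y - a)) \+ (fun y => \sum_(t <- s) c t * g (y - t)).
  by apply: funext => y; rewrite big_cons.
apply: LC_add => //; apply: LC_scale; apply: LC_shift; exact: g_LC.
Qed.

End Cont.

Section Var.
Context {R : realType}.
Local Notation TV := total_variation.
Local Notation BV := bounded_variation.

Lemma variation_scale (a b : R) F c s :
  variation a b (fun x => c * F x) s = `|c| * variation a b F s.
Proof.
rewrite /variation mulr_sumr; apply: eq_bigr => k _.
by rewrite /= -mulrBr normrM.
Qed.

Lemma BV_scale (a b : R) F c : BV a b F -> BV a b (fun x => c * F x).
Proof.
move=> [M HM]; exists (`|c| * M) => _ [l pl <-].
rewrite variation_scale ler_wpM2l //; apply: HM; exists l => //.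
Qed.

Lemma TV_scale (a b : R) (F : R -> R) (c : R) :
  (TV a b (fun x => (c * F x)%R) <= `|c|%:E * TV a b F)%E.
Proof.
apply: ge_ereal_sup => _ [_ [l pl <-] <-].
rewrite variation_scale EFinM; apply: lee_pmul; rewrite ?lee_fin ?variation_ge0 //.
by apply: ereal_sup_ubound; exists (variation a b F l) => //; exists l.
Qed.

Definition nv (F : R -> R) : R := fine (TV 0 1 F).

Lemma TVE (F : R -> R) : BV 0 1 F -> TV 0 1 F = (nv F)%:E.
Proof. by move=> h; rewrite /nv fineK //; apply/bounded_variationP. Qed.

Lemma nv_ge0 (F : R -> R) : 0 <= nv F.
Proof. by rewrite /nv fine_ge0 // total_variation_ge0. Qed.

Lemma BV_add (F G : R -> R) : BV 0 1 F -> BV 0 1 G -> BV 0 1 (F \+ G).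
Proof. by move=> h1 h2; apply: bounded_variationD => //; exact: ltr01. Qed.

Lemma BV_opp (F : R -> R) : BV 0 1 F -> BV 0 1 (\- F).
Proof. exact: bounded_variationN. Qed.

Lemma nv_add (F G : R -> R) : BV 0 1 F -> BV 0 1 G -> nv (F \+ G) <= nv F + nv G.
Proof.
move=> h1 h2; have h3 := BV_add h1 h2.
have := total_variation_le F G (@ler01 R).
by rewrite (TVE h1) (TVE h2) (TVE h3) -EFinD lee_fin.
Qed.

Lemma nv_scale (F : R -> R) (c : R) : BV 0 1 F -> nv (fun x => c * F x) <= `|c| * nv F.
Proof.
move=> h1; have h2 := BV_scale c h1.
by have := TV_scale 0 1 F c; rewrite (TVE h1) (TVE h2) -EFinM lee_fin.
Qed.

Lemma nv_opp (F : R -> R) : nv (\- F) = nv F.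
Proof. by rewrite /nv total_variationN. Qed.

Lemma nv_sub_ge (F : R -> R) (x y : R) : BV 0 1 F -> 0 <= x -> x <= y -> y <= 1 ->
  `|F y - F x| <= nv F.
Proof.
move=> h x0 xy y1.
have x1 : x <= 1 := le_trans xy y1.
rewrite -lee_fin -(TVE h) (total_variationD F x0 x1) (total_variationD F xy y1).
apply: le_trans (total_variation_ge F xy) _.
apply: le_trans (leeDl _ (total_variation_ge0 F y1)) _.
by apply: leeDr; exact: total_variation_ge0.
Qed.

Lemma nondec_nv (F : R -> R) : {in `[0, 1] &, {homo F : x y / x <= y}} ->
  BV 0 1 F /\ nv F = F 1 - F 0.
Proof.
move=> h; split; first exact: nondecreasing_bounded_variation.
by rewrite /nv nondecreasing_total_variation.
Qed.

Lemma bvnorm_add (F G : R -> R) : BV 0 1 F -> BV 0 1 G -> bvnorm (F \+ G) <= bvnorm F + bvnorm G.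
Proof.
move=> h1 h2; rewrite /bvnorm -/(nv F) -/(nv G) -/(nv (F \+ G)).
have := nv_add h1 h2; have := ler_normD (F 0) (G 0); rewrite /=; lra.
Qed.

Lemma abs_le_bvnorm (F : R -> R) (x : R) : BV 0 1 F -> 0 <= x -> x <= 1 -> `|F x| <= bvnorm F.
Proof.
move=> h x0 x1; rewrite /bvnorm -/(nv F).
have := nv_sub_ge h (lexx 0) x0 x1.
have := ler_normD (F 0) (F x - F 0); rewrite addrC subrK; lra.
Qed.

Lemma TV_pairs (F : R -> R) (s : seq R) d a b : 0 < d -> a <= b ->
  (forall y, y \in s -> a <= y /\ y + d <= b) ->
  pairwise (fun y z => y + d <= z) s ->
  ((\sum_(y <- s) `|F (y + d) - F y|)%:E <= TV a b F)%E.
Proof.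
move=> d0; elim: s a => [|y s IH] a ab H.
  by move=> _; rewrite big_nil total_variation_ge0.
rewrite pairwise_cons => /andP [/allP Hy Hp].
have [ay ydb] := H y (mem_head _ _).
have yb : y <= b by lra.
have yyd : y <= y + d by lra.
rewrite (total_variationD F ay yb) (total_variationD F yyd ydb) big_cons EFinD.
apply: le_trans (leeDr _ (total_variation_ge0 F ay)).
apply: leeD; first exact: total_variation_ge.
apply: IH => // z zs; split; first exact: Hy.
by have [] := H z (@mem_behead _ (y :: s) _ zs).
Qed.

Lemma sorted_gap (s : seq R) d : 0 < d -> sorted <=%R s -> uniq s ->
  (forall y z, y \in s -> z \in s -> y != z -> y + d <= z \/ z + d <= y) ->
  pairwise (fun y z => y + d <= z) s.
Proof.
move=> d0; elim: s => [//|y s IH] /= ps /andP [ys us] H.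
rewrite ?pairwise_cons; apply/andP; split; last first.
  apply: IH => //; first exact: path_sorted ps.
  by move=> a c a1 c1; apply: H; rewrite inE ?a1 ?c1 orbT.
have /allP Hm := order_path_min le_trans ps.
apply/allP => z zs; have yz := Hm z zs.
have yz2 : y != z by apply: contraNneq ys => ->.
case: (H y z (mem_head _ _) (@mem_behead _ (y :: s) _ zs) yz2) => // h; lra.
Qed.

Lemma TV_points (F : R -> R) (s : seq R) d a b : 0 < d -> a <= b -> uniq s ->
  (forall y, y \in s -> a <= y /\ y + d <= b) ->
  (forall y z, y \in s -> z \in s -> y != z -> y + d <= z \/ z + d <= y) ->
  ((\sum_(y <- s) `|F (y + d) - F y|)%:E <= TV a b F)%E.
Proof.
move=> d0 ab us H1 H2.
have hp : perm_eq (sort <=%R s) s by rewrite perm_sort perm_refl.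
rewrite -(perm_big _ hp).
apply: TV_pairs => //.
  by move=> y; rewrite mem_sort; exact: H1.
apply: sorted_gap => //; first exact: sort_le_sorted.
  by rewrite sort_uniq.
by move=> y z; rewrite !mem_sort; exact: H2.
Qed.

End Var.

Section Space.
Context {R : realType}.
Local Notation g := (@g R).
Local Notation BV := bounded_variation.

Definition rep (x : R) : R := xget 0 [set r | 0 <= r < 1 /\ isQ (r - x)].

Lemma rep_spec x : 0 <= rep x < 1 /\ isQ (rep x - x).
Proof.
apply: (@xgetPex _ 0 [set r | 0 <= r < 1 /\ isQ (r - x)]).
exists (x - (Num.floor x)%:~R); split.
  by have := floor_itv x; rewrite intrD => /andP [h1 h2]; apply/andP; split; lra.
exists (- (Num.floor x)%:~R); rewrite rmorphN rmorph_int; lra.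
Qed.

Lemma rep_eq x y : isQ (x - y) -> rep x = rep y.
Proof.
move=> hq; rewrite /rep; congr xget; apply: funext => r; apply: propext.
split => [[h1 h2]|[h1 h2]]; split => //.
  by rewrite (_ : r - y = (r - x) + (x - y)); [exact: isQD | lra].
by rewrite (_ : r - x = (r - y) - (x - y)); [exact: isQB | lra].
Qed.

Definition Tset := [set t : R | rep t = t].

Lemma Tset_rep x : Tset (rep x).
Proof.
by rewrite /Tset /=; apply: rep_eq; case: (rep_spec x).
Qed.

Lemma Tset_01 t : Tset t -> 0 <= t < 1.
Proof. by rewrite /Tset /= => <-; case: (rep_spec t). Qed.

Lemma Tset_inj t t' : Tset t -> Tset t' -> isQ (t - t') -> t = t'.
Proof. by rewrite /Tset /= => h1 h2 h; rewrite -h1 -h2; apply: rep_eq. Qed.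


Definition combo (s : seq R) (c : R -> R) : R -> R :=
  fun x => \sum_(t <- s) c t * g (x - t).

Definition Span (h : R -> R) :=
  exists s c, [/\ uniq s, (forall t, t \in s -> Tset t) & h = combo s c].

Lemma zero_BV : BV 0 1 (fun _ : R => 0).
Proof. by apply: nondecreasing_bounded_variation => x y _ _ _. Qed.

Lemma zero_nv : nv (fun _ : R => 0) = 0.
Proof. by have [_ ->] := @nondec_nv R (fun _ => 0) (fun x y _ _ _ => lexx 0); rewrite subrr. Qed.

Lemma gshift_homo (a : R) : {in `[0, 1] &, {homo (fun x => g (x - a)) : x y / x <= y}}.
Proof. by move=> x y _ _ xy; apply: g_homo; rewrite lerD2r. Qed.

Lemma gshift_BV (a : R) : BV 0 1 (fun x => g (x - a)).
Proof. by have [] := nondec_nv (gshift_homo a). Qed.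

Lemma gshift_nv (a : R) : nv (fun x => g (x - a)) <= 1.
Proof.
have [_ ->] := nondec_nv (gshift_homo a).
have := g_le1 (1 - a); have := g_ge0 (0 - a); lra.
Qed.

Lemma combo_nil c : combo [::] c = (fun _ => 0).
Proof. by apply: funext => x; rewrite /combo big_nil. Qed.

Lemma combo_cons a s c : combo (a :: s) c = (fun x => c a * g (x - a)) \+ combo s c.
Proof. by apply: funext => x; rewrite /combo big_cons. Qed.

Lemma combo_BV s c : BV 0 1 (combo s c).
Proof.
elim: s => [|a s IH]; first by rewrite combo_nil; exact: zero_BV.
by rewrite combo_cons; apply: BV_add => //; apply: BV_scale; exact: gshift_BV.
Qed.

Lemma combo_nv s c : nv (combo s c) <= \sum_(t <- s) `|c t|.
Proof.
elim: s => [|a s IH]; first by rewrite combo_nil zero_nv big_nil.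
rewrite combo_cons big_cons.
apply: le_trans (nv_add (BV_scale (c a) (gshift_BV a)) (combo_BV s c)) _.
apply: lerD => //; apply: le_trans (nv_scale (c a) (gshift_BV a)) _.
by rewrite ler_piMr // gshift_nv.
Qed.

Lemma combo_at s c x : `|combo s c x| <= \sum_(t <- s) `|c t|.
Proof.
apply: le_trans (ler_norm_sum _ _ _) _; apply: ler_sum => t _.
by rewrite normrM ler_piMr // ger0_norm ?g_ge0 ?g_le1.
Qed.

Lemma combo_bvnorm s c : bvnorm (combo s c) <= 2 * \sum_(t <- s) `|c t|.
Proof.
rewrite /bvnorm -/(nv (combo s c)).
have := combo_at s c 0; have := combo_nv s c; lra.
Qed.

Lemma combo_BV01 s c : BV01 (combo s c).
Proof.
split; last exact: combo_BV.
move=> x _ _; apply: Ev_left; exact: LC_combo.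
Qed.

Lemma Span_BV01 h : Span h -> BV01 h.
Proof. by move=> [s [c [_ _ ->]]]; exact: combo_BV01. Qed.

Lemma Span_BV h : Span h -> BV 0 1 h.
Proof. by move=> /Span_BV01 []. Qed.

Lemma Span_zero : Span (fun _ => 0).
Proof. by exists [::], (fun _ => 0); split => //; rewrite combo_nil. Qed.

Lemma Span_one t : Tset t -> Span (fun x => g (x - t)).
Proof.
move=> Tt; exists [:: t], (fun _ => 1); split => //.
  by move=> u; rewrite inE => /eqP ->.
by apply: funext => x; rewrite /combo big_seq1 mul1r.
Qed.

Lemma Span_scale k h : Span h -> Span (fun x => k * h x).
Proof.
move=> [s [c [us Ts ->]]]; exists s, (fun t => k * c t); split => //.
by apply: funext => x; rewrite /combo mulr_sumr; apply: eq_bigr => t _; rewrite mulrA.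
Qed.

Lemma big_sub_undup (s1 s2 : seq R) (F : R -> R) : uniq s1 ->
  \sum_(t <- undup (s1 ++ s2)) (if t \in s1 then F t else 0) = \sum_(t <- s1) F t.
Proof.
move=> u1; rewrite -big_mkcond -big_filter; apply: perm_big.
apply: uniq_perm => //; first by rewrite filter_uniq // undup_uniq.
move=> t; rewrite mem_filter mem_undup mem_cat.
by case: (t \in s1).
Qed.

Lemma big_sub_undup2 (s1 s2 : seq R) (F : R -> R) : uniq s2 ->
  \sum_(t <- undup (s1 ++ s2)) (if t \in s2 then F t else 0) = \sum_(t <- s2) F t.
Proof.
move=> u2; rewrite -big_mkcond -big_filter; apply: perm_big.
apply: uniq_perm => //; first by rewrite filter_uniq // undup_uniq.
move=> t; rewrite mem_filter mem_undup mem_cat.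
by case: (t \in s2); rewrite ?orbT.
Qed.

Lemma Span_add h1 h2 : Span h1 -> Span h2 -> Span (h1 \+ h2).
Proof.
move=> [s1 [c1 [u1 T1 ->]]] [s2 [c2 [u2 T2 ->]]].
exists (undup (s1 ++ s2)),
  (fun t => (if t \in s1 then c1 t else 0) + (if t \in s2 then c2 t else 0)).
split; first exact: undup_uniq.
  by move=> t; rewrite mem_undup mem_cat => /orP [/T1|/T2].
apply: funext => x; rewrite /combo /=.
under [RHS]eq_bigr do rewrite mulrDl.
rewrite big_split /=.
rewrite -(big_sub_undup s2 (fun t => c1 t * g (x - t)) u1).
rewrite -(big_sub_undup2 s1 (fun t => c2 t * g (x - t)) u2).
by congr (_ + _); apply: eq_bigr => t _; case: ifP; rewrite ?mul0r.
Qed.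

End Space.

Section SSet.
Context {R : realType}.
Local Notation BV := bounded_variation.

Definition Sset : set (R -> R) := [set f | BV01 f /\
  forall e, 0 < e -> exists2 h, Span h & bvnorm (f \- h) < e].

Lemma bvnorm_ext (F G : R -> R) : (forall x, F x = G x) -> bvnorm F = bvnorm G.
Proof. by move=> h; congr bvnorm; apply: funext. Qed.

Lemma bvnorm_zero : bvnorm (fun _ : R => 0) = 0.
Proof. by rewrite /bvnorm -/(nv _) zero_nv normr0 addr0. Qed.

Lemma bvnorm_scale (F : R -> R) c : BV 0 1 F -> bvnorm (fun x => c * F x) <= `|c| * bvnorm F.
Proof.
move=> h; rewrite /bvnorm -/(nv F) -/(nv (fun x => c * F x)) normrM mulrDr.
by apply: lerD => //; apply: nv_scale.
Qed.

Lemma BV_sub (F G : R -> R) : BV 0 1 F -> BV 0 1 G -> BV 0 1 (F \- G).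
Proof. by move=> h1 h2; apply: (BV_add h1 (BV_opp h2)). Qed.

Lemma Sset_sub : bv_subspace Sset.
Proof.
split; first by move=> f [].
split.
  split; first split.
  - by move=> x _ _; apply: Ev_left; exact: LC_cst.
  - exact: zero_BV.
  move=> e e0; exists (fun _ => 0); first exact: Span_zero.
  rewrite (@bvnorm_ext _ (fun _ => 0)); last by move=> x /=; rewrite subrr.
  by rewrite bvnorm_zero.
split.
  move=> f g [[lf bf] Hf] [[lg bg] Hg]; split.
    split; last exact: BV_add.
    by move=> x x0 x1; apply: cvgD; [exact: lf | exact: lg].
  move=> e e0; have e2 : 0 < e / 2 by rewrite divr_gt0.
  have [h1 s1 n1] := Hf _ e2; have [h2 s2 n2] := Hg _ e2.
  exists (h1 \+ h2); first exact: Span_add.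
  rewrite (@bvnorm_ext _ ((f \- h1) \+ (g \- h2))); last by move=> x /=; lra.
  apply: le_lt_trans (bvnorm_add _ _) _.
  - by apply: BV_sub => //; exact: Span_BV.
  - by apply: BV_sub => //; exact: Span_BV.
  lra.
move=> c f [[lf bf] Hf]; split.
  split; last exact: BV_scale.
  by move=> x x0 x1; apply: cvgMr; exact: lf.
move=> e e0; have e2 : 0 < e / (`|c| + 1) by rewrite divr_gt0 // ltr_pwDr.
have [h s n] := Hf _ e2.
exists (fun x => c * h x); first exact: Span_scale.
rewrite (@bvnorm_ext _ (fun x => c * (f \- h) x)); last by move=> x /=; rewrite mulrBr.
have bfh : BV 0 1 (f \- h) by apply: BV_sub => //; exact: Span_BV.
apply: le_lt_trans (bvnorm_scale c bfh) _.
move: n; rewrite ltr_pdivlMr ?ltr_pwDr // => n.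
apply: le_lt_trans n.
have : 0 <= bvnorm (f \- h).
  by rewrite /bvnorm -/(nv (f \- h)); apply: addr_ge0 => //; exact: nv_ge0.
move: (bvnorm (f \- h)) => b b0; rewrite mulrDr mulr1 mulrC lerDl //.
Qed.

Lemma Sset_closed : bv_closed Sset.
Proof.
move=> f bf H; split => // e e0; have e2 : 0 < e / 2 by rewrite divr_gt0.
have [g [bg Hg] n1] := H _ e2; have [h sh n2] := Hg _ e2.
exists h => //.
rewrite (@bvnorm_ext _ ((f \- g) \+ (g \- h))); last by move=> x /=; lra.
apply: le_lt_trans (bvnorm_add _ _) _.
- by apply: BV_sub; [case: bf | case: bg].
- by apply: BV_sub; [case: bg | exact: Span_BV].
lra.
Qed.

End SSet.

Section NonSep.
Context {R : realType}.
Local Notation g := (@g R).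
Local Notation BV := bounded_variation.

Lemma bvnorm_opp (F : R -> R) : bvnorm (\- F) = bvnorm F.
Proof. by rewrite /bvnorm -/(nv F) -/(nv (\- F)) nv_opp /= normrN. Qed.

Lemma pt12 : pt 1 2 = 0 :> R.
Proof. by rewrite /pt subrr mul0r. Qed.

Lemma g_jump0 d : 0 < d -> av 1 <= g d - g 0.
Proof.
move=> d0; apply: (@g_jump R 1 2) => //.
by rewrite pt12 lexx d0.
Qed.

Lemma sep_lower t t' : Tset t -> Tset t' -> t <> t' ->
  av 1 / 2 <= bvnorm ((fun x => g (x - t)) \- (fun x => g (x - t'))).
Proof.
move=> Tt Tt' tt'.
have [t0 t1] : 0 <= t /\ t < 1 by have /andP [] := Tset_01 Tt.
have nQ : ~ isQ (t - t') by move=> h; apply: tt'; exact: Tset_inj.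
have a2 : 0 < av 1 / 2 :> R by rewrite divr_gt0 ?av_gt0.
have t1p : 0 < 1 - t by rewrite subr_gt0.
have [d [d0 [Hd1 Hd2]]] := Ev_ex (Ev_and (g_right nQ a2) (Ev_le t1p)).
set F := (fun x => g (x - t)) \- (fun x => g (x - t')).
have bF : BV 0 1 F by apply: BV_sub; apply: gshift_BV.
have := nv_sub_ge bF t0 (_ : t <= t + d) (_ : t + d <= 1).
have := g_jump0 d0.
rewrite /F /= subrr (_ : t + d - t = d); last by lra.
rewrite (_ : t + d - t' = t - t' + d); last by lra.
move: Hd1; set A := g (t - t' + d); set B := g (t - t').
move=> h1 h2 h3.
apply: le_trans (_ : nv F <= _); last first.
  rewrite /bvnorm -/(nv F) lerDr normr_ge0 //.
move: h3; rewrite /F /= => h3.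
have ha : t <= t + d by lra.
have hb : t + d <= 1 by lra.
have h5 := h3 ha hb.
have h4 := ler_norm (g d - A - (g 0 - B)).
move: (nv _) h5 => v h5; lra.
Qed.


Lemma Sset_one t : Tset t -> Sset (fun x => g (x - t)).
Proof.
move=> Tt; split; first exact: Span_BV01 (Span_one Tt).
move=> e e0; exists (fun x => g (x - t)); first exact: Span_one.
rewrite (@bvnorm_ext _ _ (fun _ => 0)); last by move=> x /=; rewrite subrr.
by rewrite bvnorm_zero.
Qed.

Lemma R_uncountable : ~ countable [set: R].
Proof.
move=> cR.
have c01 : countable [set` `[(0:R), 1]%R].
  by apply: sub_countable cR; apply: subset_card_le.
have := countable_lebesgue_measure0 c01.
rewrite lebesgue_measure_itv /= lte_fin ltr01 oppr0 adde0 => /eqP.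
by rewrite eqe oner_eq0.
Qed.

Lemma Tset_uncountable : ~ countable (@Tset R).
Proof.
move=> cT; apply: R_uncountable.
have : countable (\bigcup_(t in @Tset R) [set t - ratr r | r in [set: rat]]).
  apply: bigcup_countable => // t _.
  apply: sub_countable (card_image_le _ _) _; exact: countableP.
apply: sub_countable; apply: subset_card_le => x _.
exists (rep x); first exact: Tset_rep.
have [_ [r hr]] := rep_spec x.
by exists r => //; rewrite -hr; lra.
Qed.

Lemma Sset_nonsep : ~ bv_separable (@Sset R).
Proof.
move=> [D [cD DS Hd]].
have e0 : 0 < av 1 / 4 :> R by rewrite divr_gt0 ?av_gt0.
have H : forall t, Tset t -> exists d, D d /\ bvnorm ((fun x => g (x - t)) \- d) < av 1 / 4.
  move=> t Tt; have [d Dd hd] := Hd _ (Sset_one Tt) _ e0; by exists d.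
pose phi t := xget (fun _ => 0) [set d | D d /\ bvnorm ((fun x => g (x - t)) \- d) < av 1 / 4].
have phiP t : Tset t -> D (phi t) /\ bvnorm ((fun x => g (x - t)) \- phi t) < av 1 / 4.
  by move=> Tt; exact: (xgetPex (fun _ => 0) (H t Tt)).
apply: Tset_uncountable.
move/countable_injP: cD => [code hcode].
apply/countable_injP; exists (fun t => code (phi t)) => t t' Tt Tt' eqc.
move: Tt Tt'; rewrite !inE => Tt Tt'.
have [D1 n1] := phiP t Tt; have [D2 n2] := phiP t' Tt'.
have eqphi : phi t = phi t' by apply: hcode => //; rewrite inE.
case: (pselect (t = t')) => // tt'.
have := sep_lower Tt Tt' tt'.
rewrite eqphi in n1.
have bd : BV 0 1 (phi t') by have [[_ ?] _] := DS _ D2.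
set ht := (fun x : R => g (x - t)); set ht' := (fun x : R => g (x - t')).
set d := phi t'.
have hb : bvnorm (ht \- ht') <= bvnorm (ht \- d) + bvnorm (ht' \- d).
  rewrite -[bvnorm (ht' \- d)]bvnorm_opp.
  rewrite (@bvnorm_ext _ _ ((ht \- d) \+ (\- (ht' \- d)))); last first.
    by move=> x /=; rewrite opprB addrA subrK.
  apply: bvnorm_add; first by apply: BV_sub => //; exact: gshift_BV.
  by apply: BV_opp; apply: BV_sub => //; exact: gshift_BV.
move: hb n1 n2; move: (bvnorm (ht \- ht')) (bvnorm (ht \- d)) (bvnorm (ht' \- d)).
move=> a b c; have := av_gt0 1 (R:=R); move: (av 1) => v.
move=> *; exfalso; lra.
Qed.

End NonSep.

Section Key.
Context {R : realType}.
Local Notation g := (@g R).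
Local Notation BV := bounded_variation.

Lemma ptE M p : pt M p = p%:R / (M.+1)%:R - 1 :> R.
Proof.
rewrite /pt mulrBl mulfV //; by rewrite pnatr_eq0.
Qed.

Lemma pick_pt M (t a b : R) : 0 <= a -> a <= b -> b <= 1 -> 0 <= t -> t < 1 ->
  ((M.+1)%:R)^-1 < b - a ->
  exists p, (p < nlev M)%N /\ a < t + pt M p < b.
Proof.
move=> a0 ab b1 t0 t1 hM.
have ex : exists p, (p < nlev M)%N && (a < t + pt M p).
  exists (3 * M + 3)%N; rewrite /nlev ltn_add2l /= ptE.
  rewrite (_ : (3 * M + 3)%:R = 3 * (M.+1)%:R :> R); last first.
    by rewrite natrD natrM -addn1 natrD; lra.
  rewrite mulfK ?pnatr_eq0 //; lra.
case: (ex_minnP ex) => p /andP [pl hp] hmin.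
exists p; split => //; rewrite hp /=.
case: p pl hp hmin => [|q] pl hp hmin.
  by move: hp; rewrite ptE mul0r; lra.
have hq : t + pt M q <= a.
  rewrite leNgt; apply/negP => hq.
  by have := hmin q; rewrite (ltn_trans (ltnSn q) pl) hq ltnn; move/(_ isT).
have hn : (q.+1)%:R = q%:R + 1 :> R by rewrite -addn1 natrD.
have e : pt M q.+1 = pt M q + ((M.+1)%:R)^-1 :> R.
  by rewrite !ptE hn; ring.
rewrite e addrA; apply: (le_lt_trans (_ : _ <= a + (M.+1%:R)^-1)).
  by rewrite lerD2r.
by rewrite addrC -ltrBrDr.
Qed.

Lemma term_lb (s : seq R) (c G : R -> R) t (u A eta : R) :
  t \in s -> uniq s -> A <= G t ->
  (forall t', t' \in s -> t' != t -> 0 <= G t' < eta) -> `|u| < eta ->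
  `|c t| * A - eta - eta * \sum_(t' <- s) `|c t'| <=
  `|u - \sum_(t' <- s) c t' * G t'|.
Proof.
move=> ts us hA hG hu.
rewrite [\sum_(t2 <- s) c t2 * G t2](bigD1_seq t) //=.
set Rm := \sum_(i <- s | i != t) c i * G i.
have hR : `|Rm| <= eta * \sum_(t' <- s) `|c t'|.
  apply: le_trans (ler_norm_sum _ _ _) _.
  apply: (@le_trans _ _ (\sum_(i <- s | i != t) eta * `|c i|)).
    rewrite big_seq_cond [X in _ <= X]big_seq_cond; apply: ler_sum => i /andP [iis iit].
    have /andP [g0 g1] := hG i iis iit.
    by rewrite normrM (ger0_norm g0) mulrC ler_wpM2r // ltW.
  rewrite -mulr_sumr; apply: ler_wpM2l; first by have := normr_ge0 u; lra.
  rewrite [X in _ <= X](bigD1_seq t) //= lerDr //.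
have hG0 : 0 <= A -> `|c t| * A <= `|c t * G t|.
  by move=> A0; rewrite normrM ler_wpM2l // (le_trans hA) // ler_norm.
case: (leP 0 A) => A0.
  have h1 := hG0 A0.
  move: (c t * G t) h1 => x h1.
  have h2 : `|x + Rm| <= `|u - (x + Rm)| + `|u|.
    by rewrite distrC; have := ler_normD (x + Rm - u) u; rewrite subrK.
  have h4 : `|x| <= `|x + Rm| + `|Rm|.
    by have := ler_normD (x + Rm) (- Rm); rewrite addrK normrN.
  lra.
have : `|c t| * A <= 0 by rewrite mulr_ge0_le0 // ltW.
have := normr_ge0 (u - (c t * G t + Rm)).
have : 0 <= eta * \sum_(t' <- s) `|c t'|.
  by apply: mulr_ge0; [have := normr_ge0 u; lra | apply: sumr_ge0].
have := normr_ge0 u; lra.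
Qed.


Lemma sum_cst_seq (s : seq R) (k : R) : \sum_(t <- s) k = k * (size s)%:R.
Proof.
elim: s => [|a s IH]; first by rewrite big_nil mulr0.
by rewrite big_cons IH /= -addn1 natrD mulrDr mulr1 addrC.
Qed.

Lemma key_bound (f : R -> R) (a b : R) M (s : seq R) (c : R -> R) :
  0 <= a -> a < b -> b <= 1 -> ((M.+1)%:R)^-1 < b - a ->
  uniq s -> (forall t, t \in s -> Tset t) -> BV 0 1 f ->
  (forall y : R, a < y -> y < b -> f @ within (fun z : R => 0 <= z <= 1) (nbhs y) --> f y) ->
  av M * \sum_(t <- s) `|c t| <= nv (f \- combo s c).
Proof.
move=> a0 ab b1 hM us Ts bf fc.
pose pk t := xget 0%N [set p | (p < nlev M)%N /\ a < t + pt M p < b].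
have pkP : forall t, t \in s -> (pk t < nlev M)%N /\ a < t + pt M (pk t) < b.
  move=> t ts; have /andP [t0 t1] := Tset_01 (Ts t ts).
  exact: (xgetPex 0%N (pick_pt a0 (ltW ab) b1 t0 t1 hM)).
pose y t := t + pt M (pk t).
have yinj : {in s &, injective y}.
  move=> t t' ts t's e; apply: Tset_inj (Ts t ts) (Ts t' t's) _.
  have -> : t - t' = pt M (pk t') - pt M (pk t) by move: e; rewrite /y; lra.
  exact: isQB (isQ_pt _ _) (isQ_pt _ _).
have bF : BV 0 1 (f \- combo s c) by apply: BV_sub => //; exact: combo_BV.
set K := \sum_(t <- s) `|c t|.
have K0 : 0 <= K by apply: sumr_ge0.
apply/ler_addgt0Pr => e e0.
set n := (size s)%:R : R.
have n0 : 0 <= n by rewrite /n ler0n.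
have nK0 : 0 <= n * (1 + K) by apply: mulr_ge0 => //; lra.
set eta := e / (n * (1 + K) + 1).
have eta0 : 0 < eta by rewrite divr_gt0 //; lra.
have E : Ev (fun d => forall t, t \in s ->
   (y t + d <= 1 /\ `|f (y t + d) - f (y t)| < eta) /\
   ((forall t', t' \in s -> t' != t -> g (y t - t' + d) - g (y t - t') < eta) /\
    (forall t', t' \in s -> t' != t -> d <= `|y t - y t'|))).
  apply: Ev_seq => t ts.
  have [pl /andP [ya yb]] := pkP t ts.
  have y0 : 0 <= y t by rewrite /y; lra.
  have y1 : y t < 1 by rewrite /y; lra.
  apply: Ev_and; apply: Ev_and.
  - have h : 0 < 1 - y t by rewrite subr_gt0.
    by apply: Ev_impl (Ev_le h) => d _ hd; lra.
  - exact: (Ev_within y0 y1 (fc _ ya yb) eta0).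
  - apply: Ev_seq => t' t's; case: (eqVneq t' t) => [->|nt].
      by apply: Ev_impl Ev_true => d _ _.
    have nQ : ~ isQ (y t - t').
      move=> hq; move/negP: nt; apply; apply/eqP; apply: esym.
      apply: Tset_inj (Ts t ts) (Ts t' t's) _.
      have -> : t - t' = (y t - t') - pt M (pk t) by rewrite /y; ring.
      exact: isQB hq (isQ_pt _ _).
    by apply: Ev_impl (g_right nQ eta0) => d _ h _.
  - apply: Ev_seq => t' t's; case: (eqVneq t' t) => [->|nt].
      by apply: Ev_impl Ev_true => d _ _.
    have hp : 0 < `|y t - y t'|.
      rewrite normr_gt0 subr_eq0; apply/negP => /eqP hy.
      by move/negP: nt; apply; apply/eqP; apply: yinj.
    by apply: Ev_impl (Ev_le hp) => d _ h _.
have [d [d0 Hd]] := Ev_ex E.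
have um : uniq (map y s) by rewrite map_inj_in_uniq.
have H1 : forall z, z \in map y s -> 0 <= z /\ z + d <= 1.
  move=> z /mapP [t ts ->]; have [pl /andP [ya yb]] := pkP t ts.
  by have [[h _] _] := Hd t ts; split => //; rewrite /y; lra.
have H2 : forall z z', z \in map y s -> z' \in map y s -> z != z' -> z + d <= z' \/ z' + d <= z.
  move=> z z' /mapP [t ts ->] /mapP [t' t's ->] nz.
  have ntt : t' != t by apply: contraNneq nz => ->.
  have [_ [_ h]] := Hd t ts; have := h t' t's ntt.
  by rewrite ler_normr => /orP [h1|h1]; [right|left]; lra.
have HTV := TV_points (f \- combo s c) d0 ler01 um H1 H2.
rewrite (TVE bF) lee_fin big_map in HTV.
have LB : \sum_(t <- s) (`|c t| * av M - eta - eta * K) <=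
   \sum_(t <- s) `|(f \- combo s c) (y t + d) - (f \- combo s c) (y t)|.
  rewrite big_seq_cond [X in _ <= X]big_seq_cond; apply: ler_sum => t /andP [ts _].
  have [pl /andP [ya yb]] := pkP t ts.
  have [[_ hf] [hg _]] := Hd t ts.
  have -> : (f \- combo s c) (y t + d) - (f \- combo s c) (y t) =
      (f (y t + d) - f (y t)) - \sum_(t' <- s) c t' * (g (y t - t' + d) - g (y t - t')).
    have -> : \sum_(t' <- s) c t' * (g (y t - t' + d) - g (y t - t')) =
        combo s c (y t + d) - combo s c (y t).
      rewrite /combo -sumrB; apply: eq_bigr => t' _; rewrite -mulrBr.
      by have -> : y t + d - t' = y t - t' + d by ring.
    by rewrite /=; ring.
  apply: term_lb => //.
  - have -> : y t - t = pt M (pk t) by rewrite /y; ring.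
    by apply: g_jump pl _; rewrite lexx /= ltrDl.
  - move=> t' t's nt; apply/andP; split; last exact: hg.
    by rewrite subr_ge0; apply: g_homo; rewrite lerDl ltW.
have SL : \sum_(t <- s) (`|c t| * av M - eta - eta * K) = av M * K - (eta + eta * K) * n.
  rewrite !sumrB !sum_cst_seq -mulr_suml /K; ring.
have hfin : (eta + eta * K) * n <= e.
  have -> : (eta + eta * K) * n = eta * (n * (1 + K)) by ring.
  rewrite /eta mulrAC ler_pdivrMr; last lra.
  by apply: ler_wpM2l; [exact: ltW | lra].
lra.
Qed.


End Key.

Section Final.
Context {R : realType}.
Local Notation BV := bounded_variation.

Lemma zero_of_gap (f : R -> R) (a b : R) : Sset f -> 0 <= a -> a < b -> b <= 1 ->
  (forall x, a < x < b -> ~ jumps01 f x) -> is_zero01 f.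
Proof.
move=> [[lf bf] Hf] a0 ab b1 nj.
have fc : forall y : R, a < y -> y < b ->
    f @ within (fun z : R => 0 <= z <= 1) (nbhs y) --> f y.
  move=> y ya yb; apply: contrapT => nc; apply: (nj y); first by rewrite ya yb.
  by split => //; apply/andP; split; lra.
set M := Num.truncn ((b - a)^-1).
have hM : ((M.+1)%:R)^-1 < b - a.
  have ba : 0 < b - a by rewrite subr_gt0.
  rewrite -[X in _ < X]invrK ltf_pV2 ?posrE ?ltr0n ?invr_gt0 //.
  exact: truncnS_gt.
have avM := av_gt0 M (R:=R).
move=> x x0 x1; apply/eqP; rewrite -normr_le0.
apply/ler_addgt0Pr => e e0; rewrite add0r.
pose C : R := 1 + 2 / av M.
have h2a : 0 < 2 / av M :> R by rewrite divr_gt0.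
have C0 : 0 < C by rewrite /C; lra.
have e1 : 0 < e / C by rewrite divr_gt0.
have [h [s [c [us Ts ->]]] hn] := Hf _ e1.
have kb := key_bound c a0 ab b1 hM us Ts bf fc.
have bh : BV 0 1 (combo s c) by exact: combo_BV.
have hfx := abs_le_bvnorm bf x0 x1.
have hsum : bvnorm f <= bvnorm (f \- combo s c) + bvnorm (combo s c).
  rewrite [bvnorm f](@bvnorm_ext _ _ ((f \- combo s c) \+ combo s c)); last first.
    by move=> z /=; rewrite subrK.
  by apply: bvnorm_add => //; apply: BV_sub.
have hcb := combo_bvnorm s c.
have hnv : nv (f \- combo s c) <= bvnorm (f \- combo s c).
  by rewrite /bvnorm -/(nv _) lerDr.
set K := \sum_(t <- s) `|c t| in kb hcb.
have hK : K <= nv (f \- combo s c) / av M.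
  by rewrite ler_pdivlMr // mulrC.
have : 2 * K <= 2 / av M * bvnorm (f \- combo s c).
  rewrite mulrAC -mulrA ler_wpM2l //; apply: le_trans hK _.
  by rewrite ler_wpM2r // invr_ge0 ltW.
have : bvnorm (f \- combo s c) * C <= e.
  by move: hn; rewrite ltr_pdivlMr // => /ltW.
rewrite /C.
move: hsum; move: (bvnorm (f \- combo s c)) (2 / av M) => u v h1 h2 h3.
lra.
Qed.

Lemma dense_or_zero (f : R -> R) : Sset f -> classF f \/ is_zero01 f.
Proof.
move=> Sf; have [[lf bf] _] := Sf.
case: (pselect (exists a b : R, [/\ 0 <= a, a < b, b <= 1 &
   forall x, a < x < b -> ~ jumps01 f x])) => [[a [b [a0 ab b1 nj]]]|nex].
  by right; exact: (zero_of_gap Sf a0 ab b1 nj).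
left; split => // a b a0 ab b1; apply: contrapT => nx; apply: nex.
exists a, b; split => // x hx jx; apply: nx; exists x => //.
Qed.

End Final.

Unset Implicit Arguments.

Theorem mainTheorem6 (R : realType) :
  exists S : set (R -> R),
    [/\ bv_subspace S, bv_closed S, ~ bv_separable S &
        forall f, S f -> classF f \/ is_zero01 f].
Proof.
exists (@Sset R); split.
- exact: Sset_sub.
- exact: Sset_closed.
- exact: Sset_nonsep.
- exact: dense_or_zero.
Qed.
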